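(* Let $f:2^V\to\mathbb{Z}_{\ge0}$ be a connectivity function, $W\subseteq V$, and $(C_1,C_2,C_3)$ a minimum $W$-improvement of arity 3. Then for every $W'\subseteq W$, $f(C_1\cap W')\le f(W')$. Moreover, if $f(C_1\cap W')=f(W')$, then $(C_1\cup W', C_2\setminus W', C_3\setminus W')$ is also a minimum $W$-improvement.
   Context: A connectivity function $f:2^V\to\mathbb{Z}_{\ge0}$ ($V$ finite) satisfies $f(\emptyset)=0$, $f(X)=f(V\setminus X)$, and $f(X\cup Y)+f(X\cap Y)\le f(X)+f(Y)$. For $W\subseteq V$, a $W$-improvement is a tripartition $(C_1,C_2,C_3)$ of $V$ (pairwise disjoint, possibly empty, union $V$) with $f(C_i)<f(W)/2$, $f(C_i\cap W)<f(W)$, $f(C_i\cap(V\setminus W))<f(W)$ for each $i$. Its width is $\max_i f(C_i)$, its sum-width is $\sum_i f(C_i)$, and its arity is the number of nonempty $C_i$. A $W$-improvement is minimum if it has minimum width among all $W$-improvements, subject to that minimum arity, and subject to those minimum sum-width. *)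

(* Defs.v *)
From mathcomp Require Import all_boot.
Set Implicit Arguments. Unset Strict Implicit. Unset Printing Implicit Defensive.

Definition connectivity_function (V : finType) (f : {set V} -> nat) : Prop :=
  [/\ f set0 = 0,
      (forall X, f X = f (~: X)) &
      (forall X Y, f (X :|: Y) + f (X :&: Y) <= f X + f Y)].

Definition tripartition (V : finType) (C1 C2 C3 : {set V}) : Prop :=
  [/\ [disjoint C1 & C2], [disjoint C1 & C3], [disjoint C2 & C3]
    & C1 :|: C2 :|: C3 = setT].

(* one part satisfies the improvement conditions; f C < f W / 2 is
   written 2 * f C < f W (exact, f integer-valued) *)
Definition good_part (V : finType) (f : {set V} -> nat) (W C : {set V}) : Prop :=
  [/\ 2 * f C < f W, f (C :&: W) < f W & f (C :&: ~: W) < f W].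

Definition improvement (V : finType) (f : {set V} -> nat) (W C1 C2 C3 : {set V}) : Prop :=
  tripartition C1 C2 C3 /\
  [/\ good_part f W C1, good_part f W C2 & good_part f W C3].

Definition width (V : finType) (f : {set V} -> nat) (C1 C2 C3 : {set V}) : nat :=
  maxn (f C1) (maxn (f C2) (f C3)).

Definition sum_width (V : finType) (f : {set V} -> nat) (C1 C2 C3 : {set V}) : nat :=
  f C1 + f C2 + f C3.

Definition arity (V : finType) (C1 C2 C3 : {set V}) : nat :=
  (C1 != set0) + (C2 != set0) + (C3 != set0).

Definition min_improvement (V : finType) (f : {set V} -> nat) (W C1 C2 C3 : {set V}) : Prop :=
  improvement f W C1 C2 C3 /\
  forall D1 D2 D3 : {set V}, improvement f W D1 D2 D3 ->
    width f C1 C2 C3 < width f D1 D2 D3 \/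
    (width f C1 C2 C3 = width f D1 D2 D3 /\
     (arity C1 C2 C3 < arity D1 D2 D3 \/
      (arity C1 C2 C3 = arity D1 D2 D3 /\
       sum_width f C1 C2 C3 <= sum_width f D1 D2 D3))).

(* Main.v *)
Require Import Defs.
From mathcomp Require Import all_boot.
From mathcomp Require Import zify.

Section Aux.
Variables (V : finType) (f : {set V} -> nat).
Hypothesis hf : connectivity_function f.

Lemma fC X : f (~: X) = f X.
Proof. by case: hf => _ h _; rewrite -h. Qed.

Lemma fsub X Y : f (X :|: Y) + f (X :&: Y) <= f X + f Y.
Proof. by case: hf => _ _ h. Qed.

Lemma dis_pt (A B : {set V}) : [disjoint A & B] -> forall x, ~~ ((x \in A) && (x \in B)).
Proof. rewrite disjoints_subset => /subsetP H x; apply/negP => /andP[a b].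
by move: (H x a); rewrite inE b. Qed.

Lemma pt_dis (A B : {set V}) : (forall x, ~~ ((x \in A) && (x \in B))) -> [disjoint A & B].
Proof. move=> H; rewrite disjoints_subset; apply/subsetP => x a; rewrite inE.
by apply/negP => b; move: (H x); rewrite a b. Qed.

Lemma other_part (W W' C : {set V}) : W' \subset W -> good_part f W C -> f W' <= f (W' :\: C) ->
  f (C :\: W') <= f C /\ good_part f W (C :\: W').
Proof.
move=> sW [g1 g2 g3] h.
have e1 : ~: (C :|: ~: W') = W' :\: C.
  apply/setP => x; rewrite !inE; by case: (x \in C); case: (x \in W').
have e2 : C :&: ~: W' = C :\: W'.
  apply/setP => x; rewrite !inE; by case: (x \in C); case: (x \in W').
have a := fsub C (~: W'); rewrite -fC e1 e2 fC in a.
have e3 : ~: ((C :&: W) :|: ~: W') = W' :\: C.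
  apply/setP => x; rewrite !inE; move: (subsetP sW x); rewrite ?inE.
  by case: (x \in C); case: (x \in W'); case: (x \in W) => // ->.
have e4 : (C :&: W) :&: ~: W' = (C :\: W') :&: W.
  apply/setP => x; rewrite !inE; by case: (x \in C); case: (x \in W'); case: (x \in W).
have b := fsub (C :&: W) (~: W'); rewrite -fC e3 e4 fC in b.
have e5 : (C :\: W') :&: ~: W = C :&: ~: W.
  apply/setP => x; rewrite !inE; move: (subsetP sW x); rewrite ?inE.
  by case: (x \in C); case: (x \in W'); case: (x \in W) => // ->.
split; first lia.
split; [lia | lia | by rewrite e5].
Qed.

Lemma first_part (W W' C : {set V}) : W' \subset W -> good_part f W C -> f W' <= f (C :&: W') ->
  f (C :|: W') + f (C :&: W') <= f C + f W' /\ good_part f W (C :|: W').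
Proof.
move=> sW [g1 g2 g3] h.
have a := fsub C W'.
have e1 : (C :&: W) :|: W' = (C :|: W') :&: W.
  apply/setP => x; rewrite !inE; move: (subsetP sW x); rewrite ?inE.
  by case: (x \in C); case: (x \in W'); case: (x \in W) => // ->.
have e2 : (C :&: W) :&: W' = C :&: W'.
  apply/setP => x; rewrite !inE; move: (subsetP sW x); rewrite ?inE.
  by case: (x \in C); case: (x \in W'); case: (x \in W) => // ->.
have b := fsub (C :&: W) W'; rewrite e1 e2 in b.
have e5 : (C :|: W') :&: ~: W = C :&: ~: W.
  apply/setP => x; rewrite !inE; move: (subsetP sW x); rewrite ?inE.
  by case: (x \in C); case: (x \in W'); case: (x \in W) => // ->.
split; first lia.
split; [lia | lia | by rewrite e5].
Qed.

Lemma arity_le3 (A B C : {set V}) : arity A B C <= 3.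
Proof. rewrite /arity; case: (A != set0); case: (B != set0); by case: (C != set0). Qed.

Lemma key (W C1 C2 C3 W' : {set V}) : improvement f W C1 C2 C3 -> W' \subset W ->
  f W' <= f (C1 :&: W') -> f W' <= f (W' :\: C2) -> f W' <= f (W' :\: C3) ->
  improvement f W (C1 :|: W') (C2 :\: W') (C3 :\: W') /\
  [/\ f (C1 :|: W') + f (C1 :&: W') <= f C1 + f W', f (C2 :\: W') <= f C2
    & f (C3 :\: W') <= f C3].
Proof.
move=> [[D12 D13 D23 U] [g1 g2 g3]] sW h1 h2 h3.
have [a1 b1] := first_part _ _ _ sW g1 h1.
have [a2 b2] := other_part _ _ _ sW g2 h2.
have [a3 b3] := other_part _ _ _ sW g3 h3.
split=> //; split=> //.
have d12 := dis_pt _ _ D12; have d13 := dis_pt _ _ D13; have d23 := dis_pt _ _ D23.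
split; last first.
  apply/eqP; rewrite eqEsubset subsetT /=; apply/subsetP => x _.
  have := in_setT x; rewrite -U !inE.
  by case: (x \in C1); case: (x \in C2); case: (x \in C3); case: (x \in W').
all: apply: pt_dis => x; rewrite !inE;
  move: (d12 x) (d13 x) (d23 x);
  by case: (x \in C1); case: (x \in C2); case: (x \in C3); case: (x \in W').
Qed.

End Aux.

Theorem lemma10 (V : finType) (f : {set V} -> nat) (W C1 C2 C3 : {set V}) :
  connectivity_function f ->
  min_improvement f W C1 C2 C3 ->
  arity C1 C2 C3 = 3 ->
  forall W' : {set V}, W' \subset W ->
    f (C1 :&: W') <= f W' /\
    (f (C1 :&: W') = f W' ->
       min_improvement f W (C1 :|: W') (C2 :\: W') (C3 :\: W')).
Proof.
move=> hf [imp mn] ar.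
have [[D12 D13 D23 U] _] := imp.
have d12 : forall x, ~~ ((x \in C1) && (x \in C2)) by apply: dis_pt.
have d13 : forall x, ~~ ((x \in C1) && (x \in C3)) by apply: dis_pt.
have eC2 Y : C1 :&: (Y :\: C2) = C1 :&: Y.
  apply/setP => x; rewrite !inE; move: (d12 x).
  by case: (x \in C1); case: (x \in C2); case: (x \in Y).
have eC3 Y : C1 :&: (Y :\: C3) = C1 :&: Y.
  apply/setP => x; rewrite !inE; move: (d13 x).
  by case: (x \in C1); case: (x \in C3); case: (x \in Y).
have sD (Y C : {set V}) : Y \subset W -> Y :\: C \subset W.
  move=> s; apply/subsetP => x; rewrite inE => /andP[_ y]; exact: (subsetP s).
have P1 : forall W' : {set V}, W' \subset W -> f (C1 :&: W') <= f W'.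
  move=> W0 s0; rewrite leqNgt; apply/negP => lt0.
  case: (@arg_maxnP _ W0 (fun Y => Y \subset W) (fun Y => f (C1 :&: Y) - f Y) s0)
    => Wm sm mx.
  have k0 := mx W0 s0.
  have h2 : f Wm <= f (Wm :\: C2).
    have := mx _ (sD Wm C2 sm); rewrite eC2; lia.
  have h3 : f Wm <= f (Wm :\: C3).
    have := mx _ (sD Wm C3 sm); rewrite eC3; lia.
  have [imp' [a1 a2 a3]] := @key _ _ hf _ _ _ _ _ imp sm ltac:(lia) h2 h3.
  have := @arity_le3 _ (C1 :|: Wm) (C2 :\: Wm) (C3 :\: Wm).
  case: (mn _ _ _ imp'); rewrite /width /sum_width; lia.
split; first exact: P1.
move=> eq.
have h2 : f W' <= f (W' :\: C2) by have := P1 _ (sD W' C2 H); rewrite eC2; lia.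
have h3 : f W' <= f (W' :\: C3) by have := P1 _ (sD W' C3 H); rewrite eC3; lia.
have [imp' [a1 a2 a3]] := @key _ _ hf _ _ _ _ _ imp H ltac:(lia) h2 h3.
split=> // D1 D2 D3 iD.
have := @arity_le3 _ (C1 :|: W') (C2 :\: W') (C3 :\: W').
have := mn _ _ _ iD; case: (mn _ _ _ imp'); rewrite /width /sum_width; lia.
Qed.
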